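(* Let $(A,\leq,\cdot,/)$ be a unital narhoop with distinguished left identity $1$. Then: (1) $1$ is the top element of $(A,\leq)$ if and only if $\sqcap$ is commutative on $A$; (2) the principal ideal $(1]=\{x\in A\mid x\leq 1\}$ is closed under $\cdot$ and $/$ (hence is a subnarhoop), and $((1],\sqcap)$ is a semilattice.
   Context: Write $xy$ for $x\cdot y$; $\cdot$ binds more strongly than $/$, and $/$ binds more strongly than $\sqcap$, where $x\sqcap y := (x/y)y$. A right-residuated magma is a structure $(A,\leq,\cdot,/)$ where $(A,\leq)$ is a poset and $xy\leq z\iff x\leq z/y$ for all $x,y,z\in A$. A narhoop is a right-residuated magma such that for all $x,y$: $x\leq y\iff x\sqcap y = x = y\sqcap x$. A narhoop is unital if $x/x=y/y$ for all $x,y\in A$ (equivalently, $A$ has a left identity element); then $1$ denotes the common value $x/x$, which is a left identity element. A subnarhoop is a subset closed under $\cdot$ and $/$. *)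

(* Defs.v *)
Definition nmeet {A : Type} (mul div : A -> A -> A) (x y : A) : A :=
  mul (div x y) y.

Definition right_residuated_magma {A : Type} (le : A -> A -> Prop)
    (mul div : A -> A -> A) : Prop :=
  (forall x, le x x) /\
  (forall x y, le x y -> le y x -> x = y) /\
  (forall x y z, le x y -> le y z -> le x z) /\
  (forall x y z, le (mul x y) z <-> le x (div z y)).

Definition narhoop {A : Type} (le : A -> A -> Prop) (mul div : A -> A -> A) : Prop :=
  right_residuated_magma le mul div /\
  (forall x y, le x y <-> (nmeet mul div x y = x /\ nmeet mul div y x = x)).

(* Main.v *)
Require Import Defs.
From Stdlib Require Import Setoid.

Theorem mainTheorem10 (A : Type) (le : A -> A -> Prop) (mul div : A -> A -> A)
    (one : A)
    (Hn : narhoop le mul div)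
    (Hone : forall x : A, div x x = one) :
  ((forall x : A, le x one) <->
     (forall x y : A, nmeet mul div x y = nmeet mul div y x)) /\
  ((forall x y : A, le x one -> le y one ->
      le (mul x y) one /\ le (div x y) one) /\
   (forall x y z : A, le x one -> le y one -> le z one ->
      le (nmeet mul div x y) one /\
      nmeet mul div x x = x /\
      nmeet mul div x y = nmeet mul div y x /\
      nmeet mul div (nmeet mul div x y) z = nmeet mul div x (nmeet mul div y z))).
Proof.
  destruct Hn as [[Hr [Has [Ht Hres]]] Hna].
  unfold nmeet in *.
  assert (Hle1 : forall x y, le (mul (div x y) y) x).
  { intros x y. apply Hres. apply Hr. }
  assert (Hun : forall x y, le x (div (mul x y) y)).
  { intros x y. apply Hres. apply Hr. }
  assert (Hid : forall x, mul one x = x).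
  { intros x. destruct (Hna x x) as [H _]. rewrite <- (Hone x). apply H, Hr. }
  assert (Hml : forall x x' y, le x x' -> le (mul x y) (mul x' y)).
  { intros x x' y H. apply Hres. eapply Ht; [exact H|]. apply Hun. }
  assert (Hdm : forall z z' y, le z z' -> le (div z y) (div z' y)).
  { intros z z' y H. apply Hres. eapply Ht; [apply Hle1|exact H]. }
  assert (Hmly : forall a y, le a one -> le (mul a y) y).
  { intros a y H. pose proof (Hml _ _ y H) as H'. rewrite Hid in H'. exact H'. }
  assert (Hglb : forall x y z, le z x -> le z y -> le z (mul (div x y) y)).
  { intros x y z Hx Hy. destruct (Hna z y) as [H _]. destruct (H Hy) as [E _].
    rewrite <- E. apply Hml, Hdm, Hx. }
  assert (Hdiv1 : forall x y, le (mul (div x y) y) y -> le (div x y) one).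
  { intros x y H. rewrite <- (Hone y). apply Hres, H. }
  assert (Hmeet1 : forall a b, le a one -> le b one ->
            le (mul (div a b) b) a /\ le (mul (div a b) b) b /\ le (div a b) one).
  { intros a b Ha Hb.
    assert (D : le (div a b) one).
    { eapply Ht; [apply Hdm, Ha|]. apply Hdiv1.
      destruct (Hna b one) as [H _]. destruct (H Hb) as [_ E]. rewrite E. apply Hr. }
    split; [apply Hle1|]. split; [|exact D].
    apply Hmly, D. }
  split.
  - split.
    + intros Htop x y. apply Has.
      * apply Hglb; [apply Hmly, Htop|apply Hle1].
      * apply Hglb; [apply Hmly, Htop|apply Hle1].
    + intros Hc x. eapply Ht; [apply (Hun x one)|]. apply Hdiv1.
      rewrite Hc. apply Hle1.
  - split.
    + intros x y Hx Hy. split.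
      * eapply Ht; [|exact Hy]. apply Hmly, Hx.
      * apply (Hmeet1 x y Hx Hy).
    + intros x y z Hx Hy Hz.
      assert (Cm : forall a b, le a one -> le b one ->
                 mul (div a b) b = mul (div b a) a).
      { intros a b Ha Hb. destruct (Hmeet1 a b Ha Hb) as [A1 [A2 _]].
        destruct (Hmeet1 b a Hb Ha) as [B1 [B2 _]].
        apply Has; apply Hglb; assumption. }
      assert (M1 : forall a b, le a one -> le b one -> le (mul (div a b) b) one).
      { intros a b Ha Hb. eapply Ht; [apply Hle1|exact Ha]. }
      split; [apply M1; assumption|].
      split; [rewrite Hone; apply Hid|].
      split; [apply Cm; assumption|].
      destruct (Hmeet1 x y Hx Hy) as [X1 [X2 _]].
      destruct (Hmeet1 y z Hy Hz) as [Y1 [Y2 _]].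
      pose proof (M1 x y Hx Hy) as Mxy. pose proof (M1 y z Hy Hz) as Myz.
      destruct (Hmeet1 _ z Mxy Hz) as [L1 [L2 _]].
      destruct (Hmeet1 x _ Hx Myz) as [R1 [R2 _]].
      apply Has.
      * apply Hglb.
        -- eapply Ht; [exact L1|exact X1].
        -- apply Hglb; [eapply Ht; [exact L1|exact X2]|exact L2].
      * apply Hglb.
        -- apply Hglb; [exact R1|eapply Ht; [exact R2|exact Y1]].
        -- eapply Ht; [exact R2|exact Y2].
Qed.
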